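(* Let $d\ge2$, $\omega:=\frac1{\sqrt d}\sum_{i=1}^de_i\otimes e_i\in\mathbb C^d\otimes\mathbb C^d$, $P_\omega:=\omega\omega^\ast$. Fix $\alpha\in[1,d]$, $k:=\lfloor\alpha\rfloor$, $\theta:=\alpha-k\in[0,1)$. Then $$\mu_\alpha(P_\omega)=\max_{\psi\in\mathcal V_\alpha}\langle\psi,P_\omega\psi\rangle=\frac{(k+\theta)^2}{d(k+\theta^2)}.$$ Moreover the maximum is attained by some $\psi\in\mathcal V_\alpha$ with Schmidt coefficients $s_1=\dots=s_k=\frac1{\sqrt{k+\theta^2}}$, $s_{k+1}=\frac\theta{\sqrt{k+\theta^2}}$ (which is $0$ when $\theta=0$), $s_j=0$ for $j\ge k+2$; when $\alpha=d$ one may take $\psi=\omega$.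
   Context: Schmidt coefficients $s_1(\psi)\ge\dots\ge s_d(\psi)\ge0$ of $\psi=\sum a_{ij}e_i\otimes e_j$ are the singular values of $[a_{ij}]$. For $\alpha\in[1,d]$ with $k=\lfloor\alpha\rfloor$, $\theta=\alpha-k$, $r=\lceil\alpha\rceil$, a unit vector $\psi$ is $\alpha$-admissible if $s_j(\psi)=0$ for $j\ge r+1$ and, when $\theta>0$, $s_{k+1}(\psi)\le\frac\theta k\sum_{j=1}^ks_j(\psi)$; $\mathcal V_\alpha$ is the set of these. For Hermitian $W$, $\mu_\alpha(W):=\max\{\langle\psi,W\psi\rangle:\psi\in\mathcal V_\alpha\}$. *)

(* Defs.v *)
From mathcomp Require Import all_boot all_order all_algebra.
From mathcomp Require Import reals complex.
Set Implicit Arguments. Unset Strict Implicit. Unset Printing Implicit Defensive.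
Import Order.TTheory GRing.Theory Num.Theory.
Local Open Scope ring_scope.

Section Defs.
Variable R : realType.
Local Notation C := R[i].

Definition toC (x : R) : C := Complex x 0.

Definition mxadj m n (A : 'M[C]_(m, n)) : 'M[C]_(n, m) := (map_mx conjc A)^T.

Definition unitary n (U : 'M[C]_n) : Prop := U *m mxadj U = 1%:M.

Definition singular_values d (A : 'M[C]_d) (s : 'I_d -> R) : Prop :=
  (forall j, 0 <= s j) /\
  (forall i j : 'I_d, (i <= j)%N -> s j <= s i) /\
  exists U V : 'M[C]_d, [/\ unitary U, unitary V &
     A = U *m diag_mx (\row_j toC (s j)) *m mxadj V].

(* C^d (x) C^d is identified with C^(d*d) via mxvec/vec_mx:
   psi = sum_{i,j} a_ij e_i (x) e_j  has coefficient matrix  coefmx psi = [a_ij]. *)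
Definition coefmx d (psi : 'cV[C]_(d * d)) : 'M[C]_d := vec_mx psi^T.

Definition schmidt_coeffs d (psi : 'cV[C]_(d * d)) (s : 'I_d -> R) : Prop :=
  singular_values (coefmx psi) s.

Definition inner n (phi chi : 'cV[C]_n) : C := (mxadj phi *m chi) 0 0.

Definition unit_vector n (psi : 'cV[C]_n) : Prop := inner psi psi = 1.

(* alpha-admissible unit vectors; 0-based indices: s_j (1-based) = s (j-1) *)
Definition admissible d (alpha : R) (psi : 'cV[C]_(d * d)) : Prop :=
  let k := Num.floor alpha in
  let theta := alpha - k%:~R in
  let r := Num.ceil alpha in
  unit_vector psi /\
  exists s : 'I_d -> R, schmidt_coeffs psi s /\
    (forall j : 'I_d, r <= (j : nat)%:Z -> s j = 0) /\
    (0 < theta -> forall j : 'I_d, (j : nat)%:Z = k ->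
       s j <= theta / k%:~R * \sum_(i < d | ((i : nat)%:Z < k)%R) s i).

Definition is_mu d (alpha : R) (W : 'M[C]_(d * d)) (m : R) : Prop :=
  (exists2 psi, admissible alpha psi & inner psi (W *m psi) = toC m) /\
  (forall psi, admissible alpha psi -> inner psi (W *m psi) <= toC m).

Definition omega d : 'cV[C]_(d * d) :=
  toC (Num.sqrt (d%:R : R))^-1 *: (mxvec (1%:M : 'M[C]_d))^T.

Definition P_omega d : 'M[C]_(d * d) := omega d *m mxadj (omega d).

End Defs.

Arguments omega {R} d.
Arguments P_omega {R} d.

(* Main.v *)
Require Import Defs.
From mathcomp Require Import all_boot all_order all_algebra.
From mathcomp Require Import reals complex.
From mathcomp Require Import ring lra.
Import Order.TTheory GRing.Theory Num.Theory.
Set Implicit Arguments. Unset Strict Implicit. Unset Printing Implicit Defensive.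
Local Open Scope ring_scope.
Section M.
Variable R : realType.
Local Notation C := R[i].

Lemma toCE (x : R) : toC x = (x%:C)%C. Proof. by []. Qed.

Lemma conjc_toC (x : R) : (toC x)^*%C = toC x.
Proof. by rewrite /toC /= oppr0. Qed.

Lemma toC_ge0 (x : R) : 0 <= x -> 0 <= toC x.
Proof. by move=> h; rewrite lecE /= eqxx h. Qed.

Lemma toC_le (x y : R) : (toC x <= toC y) = (x <= y).
Proof. by rewrite lecE /= eqxx. Qed.

Lemma mxadjE m n (A : 'M[C]_(m, n)) i j : mxadj A i j = (A j i)^*%C.
Proof. by rewrite /mxadj !mxE. Qed.

Lemma mxadjM m n p (A : 'M[C]_(m, n)) (B : 'M[C]_(n, p)) :
  mxadj (A *m B) = mxadj B *m mxadj A.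
Proof. by rewrite /mxadj map_mxM trmx_mul. Qed.

Lemma mxadjK m n (A : 'M[C]_(m, n)) : mxadj (mxadj A) = A.
Proof.
apply/matrixP => i j; rewrite /mxadj !mxE; exact: conjcK.
Qed.

Lemma mxadj1 n : mxadj (1%:M : 'M[C]_n) = 1%:M.
Proof. by rewrite /mxadj map_mx1 trmx1. Qed.

Lemma mxadj_diag n (s : 'I_n -> R) :
  mxadj (diag_mx (\row_j toC (s j))) = diag_mx (\row_j toC (s j)).
Proof.
apply/matrixP => i j; rewrite /mxadj !mxE.
case: (eqVneq i j) => [->|ne] /=; first by rewrite !mulr1n; exact: conjc_toC.
by rewrite !mulr0n; exact: conjc0.
Qed.

Lemma unitaryC n (U : 'M[C]_n) : unitary U -> mxadj U *m U = 1%:M.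
Proof. by move=> /mulmx1C. Qed.

Lemma sum_mxvec d (F : 'I_(d * d) -> C) : \sum_k F k = \sum_i \sum_j F (mxvec_index i j).
Proof.
rewrite pair_big /= (reindex (uncurry (@mxvec_index d d))) /=.
  by apply: eq_bigr => -[i j].
case: (curry_mxvec_bij d d) => g h1 h2; exists g => x _; [exact: h1|exact: h2].
Qed.

Lemma coefmxK d (psi : 'cV[C]_(d * d)) : psi = (mxvec (coefmx psi))^T.
Proof. by rewrite /coefmx vec_mxK trmxK. Qed.

Lemma inner_mxvec d (A B : 'M[C]_d) :
  inner (mxvec A)^T (mxvec B)^T = \sum_i \sum_j (A i j)^*%C * B i j.
Proof.
rewrite /inner /mxadj !mxE sum_mxvec.
by apply: eq_bigr => i _; apply: eq_bigr => j _; rewrite !mxE !mxvecE.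
Qed.

Lemma G1 d (psi : 'cV[C]_(d * d)) :
  inner psi psi = \tr (coefmx psi *m mxadj (coefmx psi)).
Proof.
rewrite {1 2}(coefmxK psi) inner_mxvec /mxtrace.
apply: eq_bigr => i _; rewrite !mxE; apply: eq_bigr => j _.
by rewrite !mxE mulrC.
Qed.

Lemma mx11 n (X : 'M[C]_(1, n)) (Y : 'M[C]_(n, 1)) (Z : 'M[C]_1) :
  (X *m Y *m Z) 0 0 = (X *m Y) 0 0 * Z 0 0.
Proof. by rewrite mxE big_ord1 (ord1 (ord0 : 'I_1)). Qed.

Lemma omegaE d : omega d = (mxvec (toC (Num.sqrt (d%:R : R))^-1 *: (1%:M : 'M[C]_d)))^T.
Proof. by rewrite /omega linearZ /= linearZ. Qed.

Lemma inner_omega d (psi : 'cV[C]_(d * d)) :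
  inner (omega d) psi = toC (Num.sqrt (d%:R : R))^-1 * \tr (coefmx psi).
Proof.
rewrite omegaE {1}(coefmxK psi) inner_mxvec /mxtrace mulr_sumr.
apply: eq_bigr => i _; rewrite (bigD1 i) //= big1 ?addr0.
  by rewrite !mxE eqxx mulr1 conjc_toC.
by move=> j ji; rewrite !mxE eq_sym (negPf ji) mulr0 rmorph0 mul0r.
Qed.

Lemma toC_sqrtV d : (0 < d)%N ->
  toC (Num.sqrt (d%:R : R))^-1 ^+ 2 = (d%:R : C)^-1.
Proof.
move=> d0; rewrite toCE -rmorphXn exprVn sqr_sqrtr ?ler0n //.
by rewrite fmorphV rmorph_nat.
Qed.

Lemma G2 d (psi : 'cV[C]_(d * d)) : (0 < d)%N ->
  inner psi (P_omega d *m psi) = `|\tr (coefmx psi)| ^+ 2 / d%:R.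
Proof.
move=> d0; rewrite /P_omega -mulmxA /inner mulmxA mx11.
have -> : mxadj psi *m omega d = mxadj (mxadj (omega d) *m psi).
  by rewrite mxadjM mxadjK.
rewrite mxadjE -/(inner (omega d) psi) inner_omega.
rewrite mulrC -sqr_normc normrM exprMn mulrC.
rewrite (@ger0_norm _ (toC _)) ?toC_sqrtV //.
by rewrite toC_ge0 // invr_ge0 sqrtr_ge0.
Qed.

Lemma G3 d (A : 'M[C]_d) s : singular_values A s ->
  \tr (A *m mxadj A) = toC (\sum_i s i ^+ 2).
Proof.
case=> _ [_ [U [V [hU hV ->]]]].
set D := diag_mx _.
rewrite !mxadjM mxadjK mxadj_diag -/D.
rewrite !mulmxA -[U *m D *m mxadj V *m V]mulmxA unitaryC // mulmx1 mxtrace_mulC.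
rewrite !mulmxA unitaryC // mul1mx /mxtrace toCE rmorph_sum.
apply: eq_bigr => i _; rewrite mul_diag_mx !mxE eqxx mulr1n.
by rewrite rmorphXn.
Qed.

Lemma unit_entry n (W : 'M[C]_n) i : W *m mxadj W = 1%:M -> `|W i i| <= 1.
Proof.
move=> /matrixP /(_ i i); rewrite !mxE eqxx mulr1n => h.
rewrite -(@expr_le1 _ 2) //; rewrite -h (bigD1 i) //= mxadjE -sqr_normc.
by rewrite lerDl sumr_ge0 // => j _; rewrite mxadjE -sqr_normc exprn_ge0.
Qed.

Lemma G4 d (A : 'M[C]_d) s : singular_values A s ->
  `|\tr A| <= toC (\sum_i s i).
Proof.
case=> s0 [_ [U [V [hU hV ->]]]].
set D := diag_mx _.
rewrite -mulmxA mxtrace_mulC -mulmxA.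
set W := mxadj V *m U.
have hW : W *m mxadj W = 1%:M.
  by rewrite /W mxadjM mxadjK mulmxA -(mulmxA _ U) hU mulmx1 unitaryC.
rewrite /mxtrace toCE rmorph_sum.
apply: le_trans (ler_norm_sum _ _ _) _; apply: ler_sum => i _.
have e : (\row_j toC (s j)) 0 i = toC (s i) by rewrite mxE.
rewrite mul_diag_mx mxE e normrM ger0_norm ?toC_ge0 //.
by apply: ler_piMr; [exact: toC_ge0 | exact: unit_entry].
Qed.

Definition mkpsi d (s : 'I_d -> R) : 'cV[C]_(d * d) :=
  (mxvec (diag_mx (\row_j toC (s j))))^T.

Lemma coefmx_mkpsi d (s : 'I_d -> R) :
  coefmx (mkpsi s) = diag_mx (\row_j toC (s j)).
Proof. by rewrite /coefmx /mkpsi trmxK mxvecK. Qed.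

Lemma sv_mkpsi d (s : 'I_d -> R) : (forall j, 0 <= s j) ->
  (forall i j : 'I_d, (i <= j)%N -> s j <= s i) -> schmidt_coeffs (mkpsi s) s.
Proof.
move=> h1 h2; split=> //; split=> //; exists 1%:M, 1%:M.
rewrite /unitary mxadj1 mulmx1 coefmx_mkpsi; split=> //.
by rewrite mul1mx mulmx1.
Qed.

Lemma inner_mkpsi d (s : 'I_d -> R) : (forall j, 0 <= s j) ->
  (forall i j : 'I_d, (i <= j)%N -> s j <= s i) ->
  inner (mkpsi s) (mkpsi s) = toC (\sum_i s i ^+ 2).
Proof. by move=> h1 h2; rewrite G1; apply: G3; apply: sv_mkpsi. Qed.

Lemma toC_div (x : R) d : toC (x / d%:R) = toC x / d%:R.
Proof. by rewrite !toCE rmorphM fmorphV rmorph_nat. Qed.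

Lemma innerP_mkpsi d (s : 'I_d -> R) : (0 < d)%N -> (forall j, 0 <= s j) ->
  inner (mkpsi s) (P_omega d *m mkpsi s) = toC ((\sum_i s i) ^+ 2 / d%:R).
Proof.
move=> d0 h1; rewrite G2 // coefmx_mkpsi mxtrace_diag toC_div.
have -> : \sum_j (\row_j0 toC (s j0)) 0 j = toC (\sum_i s i).
  by rewrite toCE rmorph_sum; apply: eq_bigr => j _; rewrite mxE.
rewrite ger0_norm ?toC_ge0 ?sumr_ge0 //.
by rewrite !toCE rmorphXn.
Qed.
End M.

Section Re.
Variable R : realType.

Lemma key (k th S Q t : R) : 1 <= k -> 0 <= th -> th < 1 -> 0 <= S -> 0 <= t ->
  k * t <= th * S -> S ^+ 2 <= k * Q -> Q + t ^+ 2 = 1 ->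
  (S + t) ^+ 2 <= (k + th) ^+ 2 / (k + th ^+ 2).
Proof.
move=> k1 th0 th1 S0 t0 hc cs e.
have kp : 0 < k + th ^+ 2 by rewrite ltr_wpDr ?sqr_ge0 // (lt_le_trans ltr01).
rewrite ler_pdivlMr //.
set X := k * (S *+ 2 - th * S - k * t) + th * S + k * t - (th * k * t) *+ 2.
have X0 : 0 <= X.
  have Y0 : 0 <= S *+ 2 - th * S - k * t.
    have : th * S <= S by rewrite ler_piMl // ltW.
    rewrite mulr2n; lra.
  have Z1 : 0 <= th * (S - k * t).
    apply: mulr_ge0 => //; have : th * S <= S by rewrite ler_piMl // ltW.
    lra.
  have Z2 : 0 <= (k * t) * (1 - th) by apply: mulr_ge0; [apply: mulr_ge0; lra | lra].
  have Z3 : 0 <= k * (S *+ 2 - th * S - k * t) by apply: mulr_ge0 => //; lra.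
  have -> : X = k * (S *+ 2 - th * S - k * t) + th * (S - k * t) + (k * t) * (1 - th)
    by rewrite /X; ring.
  lra.
have id : (k + th) ^+ 2 * (S ^+ 2 + k * t ^+ 2) - k * (k + th ^+ 2) * (S + t) ^+ 2
   = (th * S - k * t) * X by rewrite /X; ring.
have h1 : 0 <= (k + th) ^+ 2 * (S ^+ 2 + k * t ^+ 2) - k * (k + th ^+ 2) * (S + t) ^+ 2.
  have : 0 <= (th * S - k * t) * X by apply: mulr_ge0 => //; rewrite subr_ge0.
  by rewrite -id.
have h2 : (k + th) ^+ 2 * (S ^+ 2 + k * t ^+ 2) <= (k + th) ^+ 2 * (k * (Q + t ^+ 2)).
  apply: ler_wpM2l; first exact: sqr_ge0.
  lra.
rewrite e mulr1 in h2.
have : k * ((S + t) ^+ 2 * (k + th ^+ 2)) <= k * (k + th) ^+ 2 by nra.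
rewrite ler_pM2l; lra.
Qed.

Lemma CS (I : finType) (P : pred I) (f : I -> R) :
  (\sum_(i | P i) f i) ^+ 2 <= (\sum_(i | P i) 1) * \sum_(i | P i) f i ^+ 2.
Proof.
set S := \sum_(i | P i) f i; set n := \sum_(i | P i) (1 : R).
set Q := \sum_(i | P i) f i ^+ 2.
have H0 : 0 <= \sum_(i | P i) \sum_(j | P j) (f i - f j) ^+ 2.
  by apply: sumr_ge0 => i _; apply: sumr_ge0 => j _; apply: sqr_ge0.
have E : forall i, \sum_(j | P j) (f i - f j) ^+ 2
    = f i ^+ 2 * n - (f i * S) *+ 2 + Q.
  move=> i.
  rewrite (eq_bigr (fun j => f i ^+ 2 * 1 - (f i * f j) *+ 2 + f j ^+ 2)); last first.
    by move=> j _; rewrite sqrrB mulr1.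
  rewrite !big_split /= sumrN -!mulr_sumr -/Q sumrMnl -mulr_sumr.
  by [].
have H1 : \sum_(i | P i) \sum_(j | P j) (f i - f j) ^+ 2 = (n * Q - S ^+ 2) *+ 2.
  rewrite (eq_bigr _ (fun i _ => E i)) !big_split /= sumrN sumrMnl -!mulr_suml.
  rewrite -/Q -/S; rewrite (eq_bigr (fun i => Q * 1)); last by move=> *; rewrite mulr1.
  rewrite -mulr_sumr -/n; ring.
rewrite H1 in H0; lra.
Qed.

Lemma split3 d (F : 'I_d -> R) (kn : nat) : \sum_i F i =
  \sum_(i : 'I_d | (i < kn)%N) F i + \sum_(i : 'I_d | (i : nat) == kn) F i + \sum_(i : 'I_d | (kn < i)%N) F i.
Proof.
rewrite (bigID (fun i : 'I_d => (i < kn)%N)) /= -addrA; congr (_ + _).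
rewrite (bigID (fun i : 'I_d => (i : nat) == kn)) /=; congr (_ + _);
  apply: eq_bigl => i; case: ltngtP => //.
Qed.

Lemma count_lt d kn : (kn <= d)%N -> \sum_(i : 'I_d | (i < kn)%N) (1 : R) = kn%:R.
Proof.
by move=> h; rewrite -(big_ord_widen _ (fun _ => (1 : R)) h) sumr_const card_ord.
Qed.

Lemma upper d (kn : nat) (th : R) (s : 'I_d -> R) :
  (0 < kn)%N -> (kn <= d)%N -> 0 <= th -> th < 1 -> (forall j, 0 <= s j) ->
  \sum_i s i ^+ 2 = 1 ->
  (forall j : 'I_d, (kn < j)%N -> s j = 0) ->
  (forall j : 'I_d, (j : nat) = kn -> kn%:R * s j <= th * \sum_(i : 'I_d | (i < kn)%N) s i) ->
  (\sum_i s i) ^+ 2 <= (kn%:R + th) ^+ 2 / (kn%:R + th ^+ 2).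
Proof.
move=> k0 kd th0 th1 s0 sq z hc.
have z2 : forall j : 'I_d, (kn < j)%N -> s j ^+ 2 = 0 by move=> j /z ->; rewrite expr0n.
have e3 : \sum_(i : 'I_d | (kn < i)%N) s i ^+ 2 = 0 by apply: big1.
have e4 : \sum_(i : 'I_d | (kn < i)%N) s i = 0 by apply: big1.
rewrite (split3 (fun i => s i ^+ 2) kn) e3 addr0 in sq.
rewrite (split3 s kn) e4 addr0.
set S := \sum_(i : 'I_d | (i < kn)%N) s i in hc *.
set Q := \sum_(i : 'I_d | (i < kn)%N) s i ^+ 2 in sq.
have cs : S ^+ 2 <= kn%:R * Q by rewrite -(count_lt kd); apply: CS.
have [t [e1 e2 t0 ht]] : exists t, [/\ \sum_(i : 'I_d | (i : nat) == kn) s i = t,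
     \sum_(i : 'I_d | (i : nat) == kn) s i ^+ 2 = t ^+ 2, 0 <= t & kn%:R * t <= th * S].
  case: (ltnP kn d) => [lt|ge].
    have P1 : (fun i : 'I_d => (i : nat) == kn) =1 pred1 (Ordinal lt) by [].
    exists (s (Ordinal lt)); rewrite !(big_pred1 (Ordinal lt) P1); split=> //.
    exact: hc.
  have kdE : kn = d by apply/eqP; rewrite eqn_leq kd ge.
  exists 0; rewrite !big_pred0.
  - split=> //; first by rewrite expr0n.
    by rewrite mulr0 mulr_ge0 // sumr_ge0.
  - by move=> i /=; rewrite kdE ltn_eqF.
  - by move=> i /=; rewrite kdE ltn_eqF.
rewrite e1; rewrite e2 in sq.
apply: (key _ th0 th1 _ t0 ht cs sq); first by rewrite ler1n.
by apply: sumr_ge0.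
Qed.
End Re.
Section Main.
Variable R : realType.
Local Notation C := R[i].

Lemma admissibleE d (alpha : R) (psi : 'cV[C]_(d * d)) (kn : nat) :
  Num.floor alpha = kn%:Z ->
  admissible alpha psi <->
  (unit_vector psi /\ exists s, schmidt_coeffs psi s /\
    (forall j : 'I_d, Num.ceil alpha <= (j : nat)%:Z -> s j = 0) /\
    (0 < alpha - kn%:R -> forall j : 'I_d, (j : nat) = kn ->
       s j <= (alpha - kn%:R) / kn%:R * \sum_(i : 'I_d | (i < kn)%N) s i)).
Proof.
move=> hk; rewrite /admissible hk.
have eS : forall s : 'I_d -> R, \sum_(i : 'I_d | (i : nat)%:Z < kn%:Z) s i
    = \sum_(i : 'I_d | (i < kn)%N) s i.
  by move=> s; apply: eq_bigl => i; rewrite ltz_nat.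
split=> -[hu [s [hs [hz hc]]]]; split=> //; exists s; split=> //; split=> //.
  by move=> th j hj; rewrite -eS; apply: hc => //; rewrite hj.
by move=> th j [hj]; rewrite eS; apply: hc.
Qed.

Lemma sum_parts d kn (F : 'I_d -> R) (a b : R) : (kn <= d)%N ->
  (forall j : 'I_d, (j < kn)%N -> F j = a) ->
  (forall j : 'I_d, (j : nat) = kn -> F j = b) -> (kn = d -> b = 0) ->
  (forall j : 'I_d, (kn < j)%N -> F j = 0) ->
  \sum_i F i = kn%:R * a + b.
Proof.
move=> kd h1 h2 h3 h4.
rewrite (split3 F kn) [X in _ + X]big1 // addr0.
rewrite (eq_bigr (fun _ => a * 1)); last by move=> i h; rewrite h1 // mulr1.
rewrite -mulr_sumr count_lt // mulrC; congr (_ + _).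
case: (ltnP kn d) => [lt|ge].
  have P1 : (fun i : 'I_d => (i : nat) == kn) =1 pred1 (Ordinal lt) by [].
  by rewrite (big_pred1 (Ordinal lt) P1) h2.
have kdE : kn = d by apply/eqP; rewrite eqn_leq kd ge.
rewrite big_pred0 ?h3 // => i /=; rewrite kdE ltn_eqF //.
Qed.
End Main.

Unset Implicit Arguments.
Theorem lemma4p5 (R : realType) (d : nat) (alpha : R) :
  (2 <= d)%N -> 1 <= alpha <= d%:R ->
  let k : int := Num.floor alpha in
  let theta : R := alpha - k%:~R in
  let value : R := (k%:~R + theta) ^+ 2 / (d%:R * (k%:~R + theta ^+ 2)) in
  [/\ is_mu alpha (P_omega d) value,
      (exists2 psi : 'cV[R[i]]_(d * d), admissible alpha psi &
         inner psi (P_omega d *m psi) = toC value /\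
         schmidt_coeffs psi (fun j : 'I_d =>
           if ((j : nat)%:Z < k)%R then (Num.sqrt (k%:~R + theta ^+ 2))^-1
           else if (j : nat)%:Z == k then theta / Num.sqrt (k%:~R + theta ^+ 2)
           else 0))
    & (alpha = d%:R ->
         admissible alpha (omega d) /\
         inner (omega d) (P_omega d *m omega d) = toC value)].
Proof.
move=> d2 /andP[a1 ad] k theta value.
have d0 : (0 < d)%N by apply: leq_trans d2.
have [kn hk] : exists kn : nat, Num.floor alpha = kn%:Z.
  by exists `|Num.floor alpha|%N; rewrite gez0_abs // ltW // floor_gt0.
have kE : k = kn%:Z by rewrite /k hk.
have kR : k%:~R = kn%:R :> R by rewrite kE.
have kn1 : (1 <= kn)%N by rewrite -ltz_nat -hk floor_gt0.
have fl : kn%:R <= alpha by have := floor_le alpha; rewrite hk.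
have fu : alpha < kn%:R + 1 by have := floorD1_gt alpha; rewrite hk intrD.
have knd : (kn <= d)%N by rewrite -(ler_nat R); apply: le_trans fl ad.
have thE : theta = alpha - kn%:R by rewrite /theta kR.
have th0 : 0 <= theta by rewrite thE subr_ge0.
have th1 : theta < 1 by rewrite thE; lra.
have thd : kn = d -> theta = 0.
  by move=> e; apply/eqP; rewrite eq_le th0 andbT thE subr_le0 e.
have cu : Num.ceil alpha <= (kn + 1)%:Z.
  by rewrite ceil_le_int -pmulrn natrD; apply: ltW.
have cl : Num.ceil alpha <= kn%:Z -> theta = 0.
  rewrite ceil_le_int => h; apply/eqP; rewrite eq_le th0 andbT thE subr_le0.
  exact: h.
have cl2 : kn%:Z <= Num.ceil alpha.
  by rewrite -(ler_int R); apply: le_trans fl (ceil_ge _).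
have vE : value = (kn%:R + theta) ^+ 2 / (d%:R * (kn%:R + theta ^+ 2)) by rewrite /value kR.
rewrite vE kR kE.
set q := Num.sqrt (kn%:R + theta ^+ 2).
have qp : 0 < q by rewrite sqrtr_gt0; apply: ltr_wpDr; [exact: sqr_ge0 | rewrite ltr0n].
have qq : q ^+ 2 = kn%:R + theta ^+ 2 by rewrite sqr_sqrtr // addr_ge0 // sqr_ge0.
set sopt := (fun j : 'I_d => _).
have s_lt : forall j : 'I_d, (j < kn)%N -> sopt j = q^-1 by move=> j h; rewrite /sopt ltz_nat h.
have s_eq : forall j : 'I_d, (j : nat) = kn -> sopt j = theta / q.
  by move=> j h; rewrite /sopt ltz_nat h ltnn eqxx.
have s_gt : forall j : 'I_d, (kn < j)%N -> sopt j = 0.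
  move=> j h; rewrite /sopt ltz_nat ltnNge ltnW //=.
  by have -> : ((j : nat)%:Z == kn%:Z) = false by apply/negbTE; rewrite eqz_nat gtn_eqF.
have s_ge0 : forall j, 0 <= sopt j.
  move=> j; case: (ltngtP j kn) => h.
  - by rewrite s_lt // invr_ge0 ltW.
  - by rewrite s_gt.
  - by rewrite s_eq // divr_ge0 // ltW.
have s_dec : forall i j : 'I_d, (i <= j)%N -> sopt j <= sopt i.
  move=> i j ij; case: (ltngtP j kn) => h.
  - by rewrite !s_lt //; apply: leq_ltn_trans h.
  - by rewrite s_gt.
  - case: (ltngtP i kn) => h'.
    + by rewrite s_eq // s_lt // ler_pdivrMr // mulVf ?gt_eqF // ltW.
    + by move: ij; rewrite h leqNgt h'.
    + by rewrite !s_eq.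
have sum1 : \sum_i sopt i = (kn%:R + theta) / q.
  rewrite (sum_parts (a := q^-1) (b := theta / q) knd s_lt s_eq _ s_gt).
    by rewrite -mulrDl.
  by move/thd ->; rewrite mul0r.
have sum2 : \sum_i sopt i ^+ 2 = 1.
  rewrite (sum_parts (a := q^-2) (b := theta ^+ 2 / q ^+ 2) knd).
  - by rewrite -mulrDl qq divff // gt_eqF // ltr_wpDr ?sqr_ge0 // ltr0n.
  - by move=> j h; rewrite s_lt // exprVn.
  - by move=> j h; rewrite s_eq // expr_div_n.
  - by move/thd ->; rewrite expr0n mul0r.
  - by move=> j h; rewrite s_gt // expr0n.
have kp : 0 < kn%:R + theta ^+ 2 :> R by rewrite ltr_wpDr ?sqr_ge0 // ltr0n.
have dn0 : d%:R != 0 :> R by rewrite pnatr_eq0 -lt0n.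
have kn0 : kn%:R != 0 :> R by rewrite pnatr_eq0 -lt0n.
have P2 : exists2 psi : 'cV[R[i]]_(d * d), admissible alpha psi &
    inner psi (P_omega d *m psi) =
    toC ((kn%:R + theta) ^+ 2 / (d%:R * (kn%:R + theta ^+ 2))) /\
    schmidt_coeffs psi sopt.
  exists (mkpsi sopt); last split.
  - apply/(admissibleE _ hk); split.
      by rewrite /unit_vector inner_mkpsi // sum2.
    exists sopt; split; first exact: sv_mkpsi.
    split.
      move=> j hj; case: (ltngtP j kn) => h.
      + by have := le_trans cl2 hj; rewrite lez_nat leqNgt h.
      + by rewrite s_gt.
      + rewrite s_eq // cl ?mul0r //; by rewrite -h.
    move=> thp j hj; rewrite s_eq // -thE.
    rewrite (eq_bigr (fun _ => q^-1 * 1)); last by move=> i h; rewrite s_lt // mulr1.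
    rewrite -mulr_sumr count_lt //.
    by rewrite le_eqVlt; apply/orP; left; apply/eqP; field; rewrite kn0 gt_eqF.
  - rewrite innerP_mkpsi // sum1; congr toC.
    by rewrite expr_div_n qq; field; rewrite dn0 gt_eqF.
  - exact: sv_mkpsi.
have c0 : theta = 0 -> Num.ceil alpha <= kn%:Z.
  by move=> t0; rewrite ceil_le_int; move: t0; rewrite thE; lra.
split=> //.
  split; first by case: P2 => psi h1 [h2 _]; exists psi.
  move=> psi /(admissibleE _ hk) [hu [s [hs [hz hc]]]].
  rewrite G2 //.
  case: (hs) => s0 _.
  have sq : \sum_i s i ^+ 2 = 1.
    rewrite /unit_vector G1 (G3 hs) in hu.
    by move: hu => [->].
  rewrite -thE in hc.
  have hz' : forall j : 'I_d, (kn < j)%N -> s j = 0.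
    by move=> j h; apply: hz; apply: le_trans cu _; rewrite lez_nat addn1.
  have hc' : forall j : 'I_d, (j : nat) = kn ->
      kn%:R * s j <= theta * \sum_(i : 'I_d | (i < kn)%N) s i.
    move=> j hj; case: (ltrP 0 theta) => [tp|tn].
      have := hc tp j hj => h.
      have -> : theta * \sum_(i : 'I_d | (i < kn)%N) s i
          = kn%:R * (theta / kn%:R * \sum_(i : 'I_d | (i < kn)%N) s i).
        by field.
      by apply: ler_wpM2l => //; apply: ler0n.
    have t0 : theta = 0 by apply/eqP; rewrite eq_le tn th0.
    rewrite hz; first by rewrite mulr0 t0 mul0r.
    by apply: le_trans (c0 t0) _; rewrite hj.
  have ub := upper kn1 knd th0 th1 s0 sq hz' hc'.
  have h4 := G4 hs.
  apply: (@le_trans _ _ (toC ((\sum_i s i) ^+ 2 / d%:R))).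
    rewrite toC_div; apply: ler_wpM2r; first by rewrite invr_ge0 ler0n.
    rewrite toCE rmorphXn.
    by rewrite !expr2; apply: ler_pM; [exact: normr_ge0|exact: normr_ge0|exact: h4|exact: h4].
  rewrite toC_le.
  have -> : (kn%:R + theta) ^+ 2 / (d%:R * (kn%:R + theta ^+ 2))
      = ((kn%:R + theta) ^+ 2 / (kn%:R + theta ^+ 2)) / d%:R.
    by field; rewrite dn0 gt_eqF.
  by apply: ler_wpM2r => //; rewrite invr_ge0 ler0n.
move=> ad'.
have kd' : kn = d.
  have : (d < kn + 1)%N by rewrite -(ltr_nat R) natrD -ad'.
  by rewrite addn1 ltnS => h; apply/eqP; rewrite eqn_leq knd h.
have t0 := thd kd'.
set c := (Num.sqrt (d%:R : R))^-1.
have oE : omega d = mkpsi (fun _ : 'I_d => c).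
  rewrite omegaE /mkpsi; congr (mxvec _)^T; apply/matrixP => i j; rewrite !mxE.
  by rewrite mulr_natr.
have c2 : c ^+ 2 * d%:R = 1 by rewrite /c exprVn sqr_sqrtr ?ler0n // mulVf.
have cg : 0 <= c by rewrite invr_ge0 sqrtr_ge0.
rewrite oE; split.
  apply/(admissibleE _ hk); split.
    rewrite /unit_vector inner_mkpsi // sumr_const card_ord -mulr_natr c2 //.
  exists (fun _ => c); split; first exact: sv_mkpsi.
  split.
    move=> j hj; exfalso; have := le_trans cl2 hj; rewrite lez_nat kd' leqNgt ltn_ord //.
  by move=> tp; exfalso; move: tp; rewrite -thE t0 ltxx.
rewrite innerP_mkpsi // sumr_const card_ord; congr toC.
have -> : (c *+ d) ^+ 2 = d%:R by rewrite -(mulr_natr c d) exprMn expr2 mulrA c2 mul1r.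
rewrite t0 kd' expr0n !addr0 expr2.
by rewrite mulfV // divff // mulf_neq0.
Qed.
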